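(* Let $\mathbb{F}$ be a finite field and $C\subseteq\mathbb{F}^n$ an $(n,k)$ linear block code. Let $G$ be a $k\times n$ matrix whose rows $\mathbf{g}_1,\dots,\mathbf{g}_k$ are $k$ linearly independent rows of a characteristic matrix $X$ of $C$, with (circular) spans $(a_1,b_1],\dots,(a_k,b_k]$, and let $S=[(a_1,b_1],\dots,(a_k,b_k]]$. For $i=0,\dots,n-1$ let $M_i=\mathrm{diag}(\mu_i^1,\dots,\mu_i^k)\in\mathbb{F}^{k\times k}$, where $\mu_i^l=1$ if $i\in(a_l,b_l]$ and $\mu_i^l=0$ otherwise, and let $\ker(M_i)=\{\mathbf{u}\in\mathbb{F}^k:\mathbf{u}M_i=\mathbf{0}\}$. Let $T_{alg}$ be the tail-biting trellis whose vertices at level $i$ ($0\le i\le n-1$) are the cosets of $\ker(M_i)$ in $\mathbb{F}^k$ (equivalently, the corresponding sets of codewords $\mathbf{u}G$), and in which, for $0\le j\le n-1$, there is an edge labeled $c_j$ from a vertex $v$ at level $j$ to a vertex $w$ at level $j+1 \pmod n$ if and only if there is $\mathbf{u}\in v\cap w$ such that the codeword $\mathbf{c}=\mathbf{u}G=(c_0,\dots,c_{n-1})$ has symbol $c_j$ at position $j$. Then $T_{alg}$ is isomorphic to the KV trellis $T_{G,S}$. Moreover, if at each level $i$ each coset is represented by its least element (vectors $\mathbf{u}$ being placed in ascending order), then $T_{alg}$ is identical to $T_{G,S}$.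
   Context: Positions and levels are indexed $0,\dots,n-1$ and taken modulo $n$. For a row $\mathbf{g}$ with span $(a,b]$: $a$ and $b$ are positions with $g_a\ne0$, $g_b\ne0$, the support of $\mathbf{g}$ lies in the circular interval of positions $a,a+1,\dots,b$ (mod $n$), and $i\in(a,b]$ means $i$ lies in the circular set $\{a+1,a+2,\dots,b\}$ (mod $n$); spans with $a>b$ are circular. A characteristic matrix of $C$ (Koetter–Vardy) is an $n\times n$ matrix whose rows are codewords of $C$ with minimal (characteristic) spans such that the $n$ spans have pairwise distinct starting points and pairwise distinct ending points. The KV trellis $T_{G,S}$ is the product of the elementary tail-biting trellises $T_{\mathbf{g}_l}$ of the rows with their spans; equivalently, its vertex set at level $i$ is $\{\mathbf{u}M_i:\mathbf{u}\in\mathbb{F}^k\}$ (the vector $\mathbf{u}$ with the coordinates $l$ having $\mu_i^l=0$ set to $0$), and for each $j$ and each $\mathbf{u}\in\mathbb{F}^k$ it has an edge from $\mathbf{u}M_j$ at level $j$ to $\mathbf{u}M_{j+1}$ at level $j+1\pmod n$ labeled $\mathbf{u}\bar{\mathbf{g}}_j$, where $\bar{\mathbf{g}}_j$ is the $j$-th column of $G$. Two tail-biting trellises are isomorphic if there are bijections between their vertex sets at each level mapping edges to edges and preserving labels; ''identical'' means equal when each coset is labeled by its representative. The ordering of $\mathbb{F}^k$ is lexicographic with $0$ the least element of $\mathbb{F}$. *)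

(* Defs.v *)
From HB Require Import structures.
From mathcomp Require Import all_boot all_order all_algebra.
Set Implicit Arguments. Unset Strict Implicit. Unset Printing Implicit Defensive.
Import GRing.Theory.
Local Open Scope ring_scope.

Definition cdist (n : nat) (a i : 'I_n) : nat := ((i + n - a) %% n)%N.

Definition in_cint (n : nat) (a b i : 'I_n) : bool := (cdist a i <= cdist a b)%N.

(* i \in (a, b] : the circular set {a+1, ..., b} (mod n); (a,a] is empty *)
Definition in_span (n : nat) (a b i : 'I_n) : bool :=
  (0 < cdist a i)%N && (cdist a i <= cdist a b)%N.

Definition span_len (n : nat) (a b : 'I_n) : nat := cdist a b.

Definition has_span (F : fieldType) (n : nat) (x : 'rV[F]_n) (a b : 'I_n) : Prop :=
  [/\ x 0 a != 0, x 0 b != 0 & forall i, x 0 i != 0 -> in_cint a b i].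

Definition minimal_span (F : fieldType) (n : nat) (x : 'rV[F]_n) (a b : 'I_n) : Prop :=
  has_span x a b /\ forall a' b', has_span x a' b' -> (span_len a b <= span_len a' b')%N.

(* X (n x n) with spans (sa i, sb i] is a characteristic matrix of the code C
   (C given as a row space, a subspace of F^n) *)
Definition char_matrix (F : fieldType) (n : nat) (C : 'M[F]_n) (X : 'M[F]_n)
  (sa sb : 'I_n -> 'I_n) : Prop :=
  [/\ forall i, (row i X <= C)%MS,
      forall i, minimal_span (row i X) (sa i) (sb i),
      injective sa & injective sb].

Definition mu (F : fieldType) (n k : nat) (a b : 'I_k -> 'I_n) (i : 'I_n) (l : 'I_k) : F :=
  if in_span (a l) (b l) i then 1 else 0.

Definition Mmat (F : fieldType) (n k : nat) (a b : 'I_k -> 'I_n) (i : 'I_n) : 'M[F]_k :=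
  diag_mx (\row_l mu F a b i l).

(* vertex sets per level, and labeled edges from level j to level j+1 (mod n) *)
Record trellis (n : nat) (F : Type) (V : finType) := Trellis {
  tvert : 'I_n -> {set V};
  tedge : 'I_n -> V -> F -> V -> bool }.

Definition trellis_iso (n : nat) (F : Type) (V1 V2 : finType)
  (T1 : trellis n F V1) (T2 : trellis n F V2) : Prop :=
  exists phi : 'I_n -> V1 -> V2,
    (forall i, {in tvert T1 i &, injective (phi i)} /\
               phi i @: tvert T1 i = tvert T2 i) /\
    (forall j v c w, v \in tvert T1 j -> w \in tvert T1 (ordS j) ->
        tedge T1 j v c w = tedge T2 j (phi j v) c (phi (ordS j) w)).

Definition relabel (n : nat) (F : Type) (V1 V2 : finType)
  (T : trellis n F V1) (rep : 'I_n -> V1 -> V2) : trellis n F V2 :=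
  Trellis (fun i => rep i @: tvert T i)
    (fun j x c y => [exists A, exists B,
        [&& A \in tvert T j, B \in tvert T (ordS j), rep j A == x,
            rep (ordS j) B == y & tedge T j A c B]]).

Definition trellis_identical (n : nat) (F : Type) (V : finType)
  (T1 T2 : trellis n F V) : Prop :=
  (forall i, tvert T1 i = tvert T2 i) /\
  (forall j x c y, tedge T1 j x c y = tedge T2 j x c y).

Definition kcoset (F : finFieldType) (k : nat) (M : 'M[F]_k) (u : 'rV[F]_k)
  : {set 'rV[F]_k} := [set v | (v - u) *m M == 0].

Definition T_alg (F : finFieldType) (n k : nat) (G : 'M[F]_(k, n))
  (a b : 'I_k -> 'I_n) : trellis n F {set 'rV[F]_k} :=
  let V := fun i => [set kcoset (Mmat F a b i) u | u : 'rV[F]_k] in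
  Trellis V (fun j A c B =>
    [&& A \in V j, B \in V (ordS j) &
        [exists u, [&& u \in A, u \in B & (u *m G) 0 j == c]]]).

Definition T_KV (F : finFieldType) (n k : nat) (G : 'M[F]_(k, n))
  (a b : 'I_k -> 'I_n) : trellis n F 'rV[F]_k :=
  Trellis (fun i => [set u *m Mmat F a b i | u : 'rV[F]_k])
    (fun j x c y => [exists u,
        [&& x == u *m Mmat F a b j, y == u *m Mmat F a b (ordS j) &
            (u *m G) 0 j == c]]).

Definition lex_lt (F : finType) (k : nat) (ordF : F -> nat) (u v : 'rV[F]_k) : Prop :=
  exists l : 'I_k, (forall l' : 'I_k, (l' < l)%N -> u ord0 l' = v ord0 l') /\
                   (ordF (u ord0 l) < ordF (v ord0 l))%N.

Definition least_elt (F : finType) (k : nat) (ordF : F -> nat) (A : {set 'rV[F]_k}) x :=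
  x \in A /\ forall y, y \in A -> y <> x -> lex_lt ordF x y.

(* Main.v *)
Require Import Defs.
From HB Require Import structures.
From mathcomp Require Import all_boot all_order all_algebra.
Local Open Scope ring_scope.
Import GRing.Theory.

Section Aux.
Variables (F : finFieldType) (n k : nat) (a b : 'I_k -> 'I_n).

Lemma mulM_entry i (u : 'rV[F]_k) i0 l :
  (u *m Mmat F a b i) i0 l = u i0 l * mu F a b i l.
Proof. by rewrite /Mmat mul_mx_diag !mxE. Qed.

Lemma MM i (u : 'rV[F]_k) : u *m Mmat F a b i *m Mmat F a b i = u *m Mmat F a b i.
Proof.
apply/rowP => l; rewrite !mulM_entry /mu.
by case: ifP => _; rewrite ?mulr1 ?mulr0.
Qed.

Lemma kcosetE i (u v : 'rV[F]_k) :
  (v \in kcoset (Mmat F a b i) u) = (v *m Mmat F a b i == u *m Mmat F a b i).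
Proof. by rewrite inE mulmxBl subr_eq0. Qed.

Definition canon i (A : {set 'rV[F]_k}) : 'rV[F]_k :=
  if [pick v in A] is Some v then v *m Mmat F a b i else 0.

Lemma canon_kcoset i u : canon i (kcoset (Mmat F a b i) u) = u *m Mmat F a b i.
Proof.
rewrite /canon; case: pickP => [v|].
  by rewrite kcosetE => /eqP.
by move/(_ u); rewrite kcosetE eqxx.
Qed.

Lemma rep_eq (ordF : F -> nat) (hz : forall x, (ordF 0%R <= ordF x)%N) i u x :
  least_elt ordF (kcoset (Mmat F a b i) u) x -> x = u *m Mmat F a b i.
Proof.
move=> [xA hl]; move: xA; rewrite kcosetE => /eqP xM.
have uA : u *m Mmat F a b i \in kcoset (Mmat F a b i) u by rewrite kcosetE MM.
case: (eqVneq x (u *m Mmat F a b i)) => // ne.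
have [l [_ hlt]] := hl _ uA (fun e => negP ne (introT eqP (esym e))).
have := congr1 (fun w : 'rV[F]_k => w ord0 l) xM => /=.
move: hlt; rewrite !mulM_entry /mu; case: ifP => _.
  by rewrite !mulr1 => h e; rewrite e ltnn in h.
by rewrite mulr0 => h _; by rewrite ltnNge hz in h.
Qed.

Lemma general (G : 'M[F]_(k, n)) :
  trellis_iso (T_alg G a b) (T_KV G a b) /\
  (forall (ordF : F -> nat), injective ordF -> (forall x, (ordF 0%R <= ordF x)%N) ->
   forall rep : 'I_n -> {set 'rV[F]_k} -> 'rV[F]_k,
     (forall i A, A \in tvert (T_alg G a b) i -> least_elt ordF A (rep i A)) ->
     trellis_identical (relabel (T_alg G a b) rep) (T_KV G a b)).
Proof.
split.
  exists canon; split.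
    move=> i; split.
      move=> A B /imsetP[u _ ->] /imsetP[v _ ->].
      rewrite !canon_kcoset => e; apply/setP => w; by rewrite !kcosetE e.
    apply/setP => x; apply/imsetP/imsetP.
      by move=> [A /imsetP[u _ ->] ->]; exists u; rewrite // canon_kcoset.
    move=> [u _ ->]; exists (kcoset (Mmat F a b i) u); last by rewrite canon_kcoset.
    exact: imset_f.
  move=> j v c w hv hw /=.
  rewrite hv hw /=.
  case/imsetP: hv => u1 _ ->; case/imsetP: hw => u2 _ ->.
  rewrite !canon_kcoset; apply: eq_existsb => u.
  by rewrite !kcosetE ![u1 *m _ == _]eq_sym ![u2 *m _ == _]eq_sym.
move=> ordF _ hz rep hrep.
have re : forall i u, rep i (kcoset (Mmat F a b i) u) = u *m Mmat F a b i.
  move=> i u; apply: rep_eq hz _ _ _ _; apply: hrep; exact: imset_f.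
split.
  move=> i /=; apply/setP => x; apply/imsetP/imsetP.
    by move=> [A /imsetP[u _ ->] ->]; exists u; rewrite // re.
  move=> [u _ ->]; exists (kcoset (Mmat F a b i) u); last by rewrite re.
  exact: imset_f.
move=> j x c y /=; apply/existsP/existsP.
  move=> [A /existsP[B /and5P[hA hB /eqP<- /eqP<- he]]].
  move: hA hB he; case/imsetP=> u1 _ ->; case/imsetP=> u2 _ ->.
  case/and3P=> _ _ /existsP[u /and3P[h1 h2 h3]].
  rewrite !kcosetE in h1 h2; exists u; by rewrite !re eq_sym h1 eq_sym h2 h3.
move=> [u /and3P[/eqP-> /eqP-> h]].
exists (kcoset (Mmat F a b j) u); apply/existsP.
exists (kcoset (Mmat F a b (ordS j)) u).
rewrite !re !eqxx !imset_f //=; apply/existsP; exists u.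
by rewrite !kcosetE !eqxx h.
Qed.
End Aux.

Theorem proposition2 (F : finFieldType) (n k : nat)
  (C : 'M[F]_n) (X : 'M[F]_n) (sa sb : 'I_n -> 'I_n) (r : 'I_k -> 'I_n) :
  \rank C = k ->
  char_matrix C X sa sb ->
  injective r ->
  row_free (rowsub r X) ->
  let G : 'M[F]_(k, n) := rowsub r X in
  let a := fun l => sa (r l) in
  let b := fun l => sb (r l) in
  trellis_iso (T_alg G a b) (T_KV G a b) /\
  (forall (ordF : F -> nat), injective ordF -> (forall x, (ordF 0%R <= ordF x)%N) ->
   forall rep : 'I_n -> {set 'rV[F]_k} -> 'rV[F]_k,
     (forall i A, A \in tvert (T_alg G a b) i -> least_elt ordF A (rep i A)) ->
     trellis_identical (relabel (T_alg G a b) rep) (T_KV G a b)).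
Proof.
move=> _ _ _ _ G a b; exact: general.
Qed.
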